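(* Let $\mathbb{H}$ be a finite dimensional real Hilbert space, $\epsilon\in[0,1)$, and $T\in\mathbb{B}(\mathbb{H})$. Then for any $A\in\mathbb{B}(\mathbb{H})$, $T\perp_B^{\epsilon}A$ if and only if $|\langle Tx,Ax\rangle|\le\epsilon\|T\|\|A\|$ for some $x\in M_T$. Moreover, if $M_T\subseteq M_A$, then $T\perp_B^{\epsilon}A$ if and only if $Tx\perp^{\epsilon}Ax$ for some $x\in M_T$.
   Context: $M_T=\{x\in\mathbb{H}:\|x\|=1,\ \|Tx\|=\|T\|\}$. For $\epsilon\in[0,1)$ and $u,v$ in a normed space, $u\perp_B^{\epsilon}v$ means $\|u+\lambda v\|^2\ge\|u\|^2-2\epsilon\|u\|\|\lambda v\|$ for all $\lambda\in\mathbb{R}$ (operators are taken with the operator norm). In an inner product space, $x\perp^{\epsilon}y$ means $|\langle x,y\rangle|\le\epsilon\|x\|\|y\|$. *)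

(* Defs.v *)
(* The finite-dimensional real Hilbert space H is modelled as R^n (n >= 1)
   with the standard inner product; vectors are nat -> R (only coordinates
   0..n-1 matter), bounded operators are n x n real matrices (nat -> nat -> R,
   only entries with indices < n matter), acting by matrix-vector product. *)
From Stdlib Require Import Reals Lra ClassicalEpsilon.
Open Scope R_scope.

Definition vec := nat -> R.
Definition mat := nat -> nat -> R.

Fixpoint rsum (n : nat) (f : nat -> R) : R :=
  match n with O => 0 | S k => rsum k f + f k end.

Definition inner (n : nat) (x y : vec) : R := rsum n (fun i => x i * y i).
Definition vnorm (n : nat) (x : vec) : R := sqrt (inner n x x).

Definition app (n : nat) (T : mat) (x : vec) : vec :=
  fun i => rsum n (fun j => T i j * x j).

Definition madd (T A : mat) : mat := fun i j => T i j + A i j.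
Definition mscale (l : R) (A : mat) : mat := fun i j => l * A i j.

Definition opnorm (n : nat) (T : mat) : R :=
  epsilon (inhabits 0)
    (fun r => is_lub (fun y => exists x : vec, vnorm n x = 1 /\ y = vnorm n (app n T x)) r).

Definition MT (n : nat) (T : mat) (x : vec) : Prop :=
  vnorm n x = 1 /\ vnorm n (app n T x) = opnorm n T.

Definition BJ_eps (n : nat) (eps : R) (T A : mat) : Prop :=
  forall l : R,
    opnorm n (madd T (mscale l A)) ^ 2
      >= opnorm n T ^ 2 - 2 * eps * opnorm n T * opnorm n (mscale l A).

Definition iperp_eps (n : nat) (eps : R) (x y : vec) : Prop :=
  Rabs (inner n x y) <= eps * vnorm n x * vnorm n y.

(* Main.v *)
Require Import Defs.
From Stdlib Require Import Reals Lra Lia Psatz Ranalysis ClassicalEpsilon Classical FunctionalExtensionality ZArith.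
Open Scope R_scope.

Lemma rsum_ext n f g : (forall i, (i < n)%nat -> f i = g i) -> rsum n f = rsum n g.
Proof. induction n; simpl; intros H; [reflexivity|].
rewrite IHn by (intros; apply H; lia). rewrite H by lia. reflexivity. Qed.

Lemma rsum_lin n a b f g : rsum n (fun i => a * f i + b * g i) = a * rsum n f + b * rsum n g.
Proof. induction n; simpl; [ring|]. rewrite IHn; ring. Qed.

Lemma rsum_nonneg n f : (forall i, (i<n)%nat -> 0 <= f i) -> 0 <= rsum n f.
Proof. induction n; simpl; intros H; [lra|].
assert (0 <= f n) by (apply H; lia).
assert (0 <= rsum n f) by (apply IHn; intros; apply H; lia). lra. Qed.

Lemma rsum_le n f g : (forall i, (i<n)%nat -> f i <= g i) -> rsum n f <= rsum n g.
Proof. induction n; simpl; intros H; [lra|].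
assert (f n <= g n) by (apply H; lia).
assert (rsum n f <= rsum n g) by (apply IHn; intros; apply H; lia). lra. Qed.

Lemma rsum_term_le n f i : (forall j, (j<n)%nat -> 0 <= f j) -> (i < n)%nat -> f i <= rsum n f.
Proof. induction n; intros H Hi; [lia|]. simpl. destruct (Nat.eq_dec i n).
- subst. assert (0 <= rsum n f) by (apply rsum_nonneg; intros; apply H; lia). lra.
- assert (f i <= rsum n f) by (apply IHn; [intros; apply H; lia| lia]).
  assert (0 <= f n) by (apply H; lia). lra. Qed.

Lemma rsum_abs n f : Rabs (rsum n f) <= rsum n (fun i => Rabs (f i)).
Proof. induction n; simpl. rewrite Rabs_R0; lra.
eapply Rle_trans. apply Rabs_triang. lra. Qed.

Definition vlc (a : R) (x : vec) (b : R) (y : vec) : vec := fun i => a * x i + b * y i.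

Lemma inner_sym n x y : inner n x y = inner n y x.
Proof. unfold inner. apply rsum_ext; intros; ring. Qed.

Lemma inner_lc_l n a x b y z : inner n (vlc a x b y) z = a * inner n x z + b * inner n y z.
Proof. unfold inner, vlc. rewrite <- rsum_lin. apply rsum_ext; intros; ring. Qed.

Lemma inner_lc_r n a x b y z : inner n z (vlc a x b y) = a * inner n z x + b * inner n z y.
Proof. rewrite inner_sym, inner_lc_l, (inner_sym n x), (inner_sym n y). ring. Qed.

Lemma inner_lc2 n a x b y : inner n (vlc a x b y) (vlc a x b y) =
  a^2 * inner n x x + 2*a*b * inner n x y + b^2 * inner n y y.
Proof. rewrite !inner_lc_l, !inner_lc_r, (inner_sym n y x). ring. Qed.

Lemma app_lc n T a x b y : app n T (vlc a x b y) = vlc a (app n T x) b (app n T y).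
Proof. apply functional_extensionality; intro i. unfold app, vlc.
rewrite <- rsum_lin. apply rsum_ext; intros; ring. Qed.

Lemma app_madd n T A l x : app n (madd T (mscale l A)) x = vlc 1 (app n T x) l (app n A x).
Proof. apply functional_extensionality; intro i. unfold app, madd, mscale, vlc.
rewrite <- rsum_lin. apply rsum_ext; intros; ring. Qed.

Lemma app_mscale n l A x : app n (mscale l A) x = vlc l (app n A x) 0 (app n A x).
Proof. apply functional_extensionality; intro i. unfold app, mscale, vlc.
rewrite <- rsum_lin. apply rsum_ext; intros; ring. Qed.

Lemma inner_self_nonneg n x : 0 <= inner n x x.
Proof. unfold inner. apply rsum_nonneg. intros; nra. Qed.

Lemma inner_bound2 n u v : 2 * Rabs (inner n u v) <= inner n u u + inner n v v.
Proof.
pose proof (inner_self_nonneg n (vlc 1 u 1 v)) as H1.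
pose proof (inner_self_nonneg n (vlc 1 u (-1) v)) as H2.
rewrite inner_lc2 in H1, H2. unfold Rabs; destruct Rcase_abs; nra. Qed.

Definition e0 : vec := fun i => if Nat.eqb i 0 then 1 else 0.

Lemma e0_unit n : (1 <= n)%nat -> inner n e0 e0 = 1.
Proof. induction n; intros H; [lia|]. unfold inner in *; simpl.
destruct n. simpl. unfold e0; simpl; ring.
rewrite IHn by lia. unfold e0; simpl. ring. Qed.

Lemma coord_bound n x i : inner n x x = 1 -> (i < n)%nat -> Rabs (x i) <= 1.
Proof. intros H Hi. assert (x i * x i <= 1).
{ rewrite <- H. unfold inner. apply (rsum_term_le n (fun j => x j * x j)); auto. intros; nra. }
unfold Rabs; destruct Rcase_abs; nra. Qed.

Lemma inner_zero_coord n x i : inner n x x = 0 -> (i < n)%nat -> x i = 0.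
Proof. intros H Hi. assert (x i * x i <= 0).
{ rewrite <- H. unfold inner. apply (rsum_term_le n (fun j => x j * x j)); auto. intros; nra. }
nra. Qed.

Definition Cb n (T : mat) := rsum n (fun i => (rsum n (fun j => Rabs (T i j)))^2).

Lemma app_bound n T x : inner n x x = 1 -> inner n (app n T x) (app n T x) <= Cb n T.
Proof. intros H. unfold inner at 1, Cb. apply rsum_le. intros i Hi.
assert (Rabs (app n T x i) <= rsum n (fun j => Rabs (T i j))).
{ unfold app. eapply Rle_trans. apply rsum_abs. apply rsum_le. intros j Hj.
  rewrite Rabs_mult. pose proof (coord_bound n x j H Hj). pose proof (Rabs_pos (T i j)). nra. }
pose proof (Rabs_pos (app n T x i)). unfold Rabs in *; destruct Rcase_abs; nra. Qed.
Lemma vnorm_1 n x : vnorm n x = 1 <-> inner n x x = 1.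
Proof. unfold vnorm. split; intro H.
- pose proof (sqrt_sqrt _ (inner_self_nonneg n x)). rewrite H in H0. lra.
- rewrite H. apply sqrt_1. Qed.

Lemma vnorm_sq n x : vnorm n x ^ 2 = inner n x x.
Proof. unfold vnorm. simpl. rewrite Rmult_1_r. apply sqrt_sqrt, inner_self_nonneg. Qed.

Lemma vnorm_nonneg n x : 0 <= vnorm n x.
Proof. apply sqrt_pos. Qed.

Definition OS n T := fun y => exists x : vec, vnorm n x = 1 /\ y = vnorm n (app n T x).

Lemma opnorm_spec n T : (1 <= n)%nat -> is_lub (OS n T) (opnorm n T).
Proof. intros Hn. unfold opnorm. apply epsilon_spec.
destruct (completeness (OS n T)) as [m Hm].
- exists (sqrt (Cb n T)). intros y [x [Hx ->]]. unfold vnorm. apply sqrt_le_1_alt.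
  apply app_bound. apply vnorm_1; auto.
- exists (vnorm n (app n T e0)). exists e0. split; auto. apply vnorm_1, e0_unit; auto.
- exists m; exact Hm. Qed.

Lemma opnorm_ge n T x : (1 <= n)%nat -> inner n x x = 1 -> vnorm n (app n T x) <= opnorm n T.
Proof. intros Hn Hx. destruct (opnorm_spec n T Hn) as [H _]. apply H.
exists x; split; auto. apply vnorm_1; auto. Qed.

Lemma opnorm_nonneg n T : (1 <= n)%nat -> 0 <= opnorm n T.
Proof. intros Hn. eapply Rle_trans. apply (vnorm_nonneg n (app n T e0)).
apply opnorm_ge; auto. apply e0_unit; auto. Qed.

Lemma opnorm_ge2 n T x : (1 <= n)%nat -> inner n x x = 1 ->
  inner n (app n T x) (app n T x) <= opnorm n T ^ 2.
Proof. intros Hn Hx. rewrite <- vnorm_sq. pose proof (opnorm_ge n T x Hn Hx).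
pose proof (vnorm_nonneg n (app n T x)). nra. Qed.

Lemma opnorm_approx n T d : (1 <= n)%nat -> 0 < d ->
  exists x, inner n x x = 1 /\ opnorm n T ^ 2 - d < inner n (app n T x) (app n T x).
Proof. intros Hn Hd. pose proof (opnorm_nonneg n T Hn) as Ho.
set (o := opnorm n T) in *. destruct (Req_dec o 0) as [Ho0|Ho0].
- exists e0. split. apply e0_unit; auto. rewrite Ho0.
  pose proof (inner_self_nonneg n (app n T e0)). nra.
- set (d' := Rmin o (d / (2*o))).
  assert (Hd1 : 0 < d') by (unfold d'; apply Rmin_glb_lt; [lra| apply Rdiv_lt_0_compat; lra]).
  assert (Hd2 : d' <= o) by apply Rmin_l.
  assert (Hd3 : 2 * o * d' <= d).
  { assert (d' <= d/(2*o)) by apply Rmin_r.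
    assert (2*o*d' <= 2*o*(d/(2*o))) by (apply Rmult_le_compat_l; lra).
    replace (2*o*(d/(2*o))) with d in H0 by (field; lra). lra. }
  assert (exists x, inner n x x = 1 /\ o - d' < vnorm n (app n T x)) as [x [Hx Hv]].
  { apply NNPP; intro Hno.
    destruct (opnorm_spec n T Hn) as [_ Hl].
    assert (o <= o - d'). { apply Hl. intros y [x [Hx ->]].
      apply Rnot_lt_le. intro Hc. apply Hno. exists x. split; auto. apply vnorm_1; auto. }
    lra. }
  exists x. split; auto. rewrite <- vnorm_sq.
  assert (0 <= o - d') by lra. nra. Qed.

Lemma vnorm_scale n l A x : vnorm n (app n (mscale l A) x) = Rabs l * vnorm n (app n A x).
Proof. rewrite app_mscale. unfold vnorm. rewrite inner_lc2.
replace (l ^ 2 * inner n (app n A x) (app n A x) + 2 * l * 0 * inner n (app n A x) (app n A x) +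
 0 ^ 2 * inner n (app n A x) (app n A x)) with (Rsqr l * inner n (app n A x) (app n A x))
 by (unfold Rsqr; ring).
rewrite sqrt_mult_alt by apply Rle_0_sqr. rewrite sqrt_Rsqr_abs. reflexivity. Qed.

Lemma opnorm_scale n l A : (1 <= n)%nat -> opnorm n (mscale l A) = Rabs l * opnorm n A.
Proof. intros Hn. pose proof (opnorm_spec n A Hn) as [UA LA].
pose proof (opnorm_spec n (mscale l A) Hn) as [US LS].
pose proof (opnorm_nonneg n A Hn). pose proof (opnorm_nonneg n (mscale l A) Hn).
pose proof (Rabs_pos l).
apply Rle_antisym.
- apply LS. intros y [x [Hx ->]]. rewrite vnorm_scale.
  apply Rmult_le_compat_l; auto. apply UA. exists x; auto.
- destruct (Req_dec l 0) as [Hl|Hl].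
  + subst l. rewrite Rabs_R0, Rmult_0_l. auto.
  + assert (Hl' : 0 < Rabs l) by (apply Rabs_pos_lt; auto).
    assert (opnorm n A <= opnorm n (mscale l A) / Rabs l).
    { apply LA. intros y [x [Hx ->]].
      assert (Rabs l * vnorm n (app n A x) <= opnorm n (mscale l A)).
      { rewrite <- vnorm_scale. apply US. exists x; auto. }
      apply (Rmult_le_reg_l (Rabs l)); auto.
      replace (Rabs l * (opnorm n (mscale l A) / Rabs l)) with (opnorm n (mscale l A)) by (field; lra). lra. }
    apply (Rmult_le_compat_l (Rabs l)) in H2; [|lra].
    replace (Rabs l * (opnorm n (mscale l A) / Rabs l)) with (opnorm n (mscale l A)) in H2 by (field; lra).
    lra. Qed.

Definition MT2 n T x := inner n x x = 1 /\ inner n (app n T x) (app n T x) = opnorm n T ^ 2.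

Lemma MT_iff n T x : (1 <= n)%nat -> MT n T x <-> MT2 n T x.
Proof. intros Hn. unfold MT, MT2. pose proof (opnorm_nonneg n T Hn).
rewrite vnorm_1. split; intros [H1 H2]; split; auto.
- rewrite <- vnorm_sq, H2. reflexivity.
- unfold vnorm. rewrite H2. apply sqrt_pow2; auto. Qed.
Definition sinc (phi : nat -> nat) := forall a b, (a < b)%nat -> (phi a < phi b)%nat.

Lemma sinc_ge phi : sinc phi -> forall k, (k <= phi k)%nat.
Proof. intros H k. induction k; [lia|]. pose proof (H k (S k) ltac:(lia)). lia. Qed.

Lemma sinc_step phi : (forall k, (phi k < phi (S k))%nat) -> sinc phi.
Proof. intros H a b Hab. induction Hab. apply H. pose proof (H m). lia. Qed.

Lemma sinc_comp phi psi : sinc phi -> sinc psi -> sinc (fun k => phi (psi k)).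
Proof. intros H1 H2 a b Hab. apply H1, H2, Hab. Qed.

Lemma cv_sub u l phi : Un_cv u l -> sinc phi -> Un_cv (fun k => u (phi k)) l.
Proof. intros H Hp e He. destruct (H e He) as [N HN]. exists N. intros k Hk.
apply HN. pose proof (sinc_ge phi Hp k). lia. Qed.

Lemma cv_const c : Un_cv (fun _ => c) c.
Proof. intros e He. exists O. intros. unfold Rdist. rewrite Rminus_diag, Rabs_R0. auto. Qed.

Lemma cv_le u v l m : Un_cv u l -> Un_cv v m -> (forall k, u k <= v k) -> l <= m.
Proof. intros Hu Hv H. apply Rnot_lt_le. intro Hlt.
set (e := (l - m)/2). assert (He : e > 0) by (unfold e; lra).
destruct (Hu e He) as [N1 H1]. destruct (Hv e He) as [N2 H2].
specialize (H1 (N1+N2)%nat ltac:(lia)). specialize (H2 (N1+N2)%nat ltac:(lia)).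
specialize (H (N1+N2)%nat). unfold Rdist in *.
apply Rabs_def2 in H1. apply Rabs_def2 in H2. unfold e in *. lra. Qed.

Lemma inv_cv0 phi : sinc phi -> Un_cv (fun k => / (INR (phi k) + 1)) 0.
Proof. intros Hp e He. destruct (archimed (/ e)) as [H1 _].
assert (0 < IZR (up (/e))) by (pose proof (Rinv_0_lt_compat e He); lra).
exists (Z.to_nat (up (/ e))). intros k Hk. unfold Rdist. rewrite Rminus_0_r.
pose proof (sinc_ge phi Hp k).
assert (Hle : INR (Z.to_nat (up (/e))) <= INR (phi k)) by (apply le_INR; lia).
rewrite INR_IZR_INZ, Z2Nat.id in Hle by (apply le_IZR; lra).
pose proof (pos_INR (phi k)).
rewrite Rabs_pos_eq by (left; apply Rinv_0_lt_compat; lra).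
apply (Rmult_lt_reg_l (INR (phi k) + 1)); [lra|]. rewrite Rinv_r by lra.
assert (e * (/ e) = 1) by (field; lra).
assert (/ e < INR (phi k) + 1) by lra. nra. Qed.

Lemma my_choice {A B : Type} (P : A -> B -> Prop) : (forall a, exists b, P a b) -> exists f, forall a, P a (f a).
Proof. intros H. exists (fun a => proj1_sig (constructive_indefinite_description _ (H a))).
intro a. exact (proj2_sig (constructive_indefinite_description _ (H a))). Qed.

Lemma BW1 (u : nat -> R) : (forall k, Rabs (u k) <= 1) ->
  exists phi l, sinc phi /\ Un_cv (fun k => u (phi k)) l.
Proof. intros Hb.
destruct (Bolzano_Weierstrass u (fun c => -1 <= c <= 1) (compact_P3 (-1) 1)) as [l Hl].
{ intro k. specialize (Hb k). apply Rabs_le_between' in Hb || (unfold Rabs in Hb; destruct Rcase_abs in Hb; lra). }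
assert (Hp : forall N k : nat, exists p, (N <= p)%nat /\ Rabs (u p - l) < / (INR k + 1)).
{ intros N k. assert (Hpos : 0 < / (INR k + 1)) by (apply Rinv_0_lt_compat; pose proof (pos_INR k); lra).
  destruct (Hl (fun y => Rabs (y - l) < / (INR k + 1)) N) as [p [Hp1 Hp2]].
  - exists (mkposreal _ Hpos). intros y Hy. unfold disc in Hy. simpl in Hy. exact Hy.
  - exists p; auto. }
destruct (my_choice (fun (Nk : nat * nat) p => (fst Nk <= p)%nat /\ Rabs (u p - l) < / (INR (snd Nk) + 1))
   (fun Nk => Hp (fst Nk) (snd Nk))) as [pick Hpick].
set (phi := fix phi (k : nat) : nat := match k with O => pick (O, O) | S k' => pick (S (phi k'), S k') end).
exists phi, l. split.
- apply sinc_step. intro k. simpl. destruct (Hpick (S (phi k), S k)) as [H _]. simpl in H. lia.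
- assert (Hc : forall k, Rabs (u (phi k) - l) < / (INR k + 1)).
  { intro k. destruct k; simpl.
    + exact (proj2 (Hpick (O,O))).
    + exact (proj2 (Hpick (S (phi k), S k))). }
  intros e He. destruct (inv_cv0 (fun k => k) (fun a b H => H) e He) as [N HN].
  exists N. intros k Hk. specialize (HN k Hk). unfold Rdist in *. rewrite Rminus_0_r in HN.
  specialize (Hc k). rewrite Rabs_pos_eq in HN by (left; apply Rinv_0_lt_compat; pose proof (pos_INR k); lra).
  lra. Qed.
Lemma BWn (x : nat -> vec) : forall m, (forall k i, (i < m)%nat -> Rabs (x k i) <= 1) ->
  exists phi (L : vec), sinc phi /\ forall i, (i < m)%nat -> Un_cv (fun k => x (phi k) i) (L i).
Proof. induction m; intros Hb.
- exists (fun k => k), (fun _ => 0). split. intros a b H; exact H. intros; lia.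
- destruct IHm as [phi [L [Hphi HL]]]. { intros; apply Hb; lia. }
  destruct (BW1 (fun k => x (phi k) m)) as [psi [l [Hpsi Hl]]]. { intro; apply Hb; lia. }
  exists (fun k => phi (psi k)), (fun i => if Nat.eq_dec i m then l else L i). split.
  + apply sinc_comp; auto.
  + intros i Hi. destruct (Nat.eq_dec i m).
    * subst. exact Hl.
    * apply (cv_sub (fun k => x (phi k) i)); auto. apply HL. lia. Qed.

Lemma cv_rsum n (f : nat -> nat -> R) (L : nat -> R) :
  (forall i, (i < n)%nat -> Un_cv (fun k => f k i) (L i)) ->
  Un_cv (fun k => rsum n (f k)) (rsum n L).
Proof. induction n; intros H; simpl.
- apply cv_const.
- apply CV_plus. apply IHn; intros; apply H; lia. apply H; lia. Qed.

Lemma cv_app n T (x : nat -> vec) (L : vec) :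
  (forall i, (i < n)%nat -> Un_cv (fun k => x k i) (L i)) ->
  forall i, Un_cv (fun k => app n T (x k) i) (app n T L i).
Proof. intros H i. unfold app.
apply (cv_rsum n (fun k j => T i j * x k j) (fun j => T i j * L j)).
intros j Hj. apply CV_mult. apply cv_const. apply H; auto. Qed.

Lemma cv_inner n (u v : nat -> vec) (U V : vec) :
  (forall i, (i < n)%nat -> Un_cv (fun k => u k i) (U i)) ->
  (forall i, (i < n)%nat -> Un_cv (fun k => v k i) (V i)) ->
  Un_cv (fun k => inner n (u k) (v k)) (inner n U V).
Proof. intros Hu Hv. unfold inner.
apply (cv_rsum n (fun k j => u k j * v k j) (fun j => U j * V j)).
intros j Hj. apply CV_mult; auto. Qed.

Lemma extract n (x : nat -> vec) : (forall k, inner n (x k) (x k) = 1) ->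
  exists phi (L : vec), sinc phi /\ forall i, (i < n)%nat -> Un_cv (fun k => x (phi k) i) (L i).
Proof. intros H. apply BWn. intros k i Hi. apply (coord_bound n); auto. Qed.

Lemma MT_nonempty n T : (1 <= n)%nat -> exists x, MT2 n T x.
Proof. intros Hn.
destruct (my_choice (fun k x => inner n x x = 1 /\ opnorm n T ^ 2 - / (INR k + 1) < inner n (app n T x) (app n T x)))
  as [xs Hxs].
{ intro k. apply opnorm_approx; auto. apply Rinv_0_lt_compat. pose proof (pos_INR k). lra. }
destruct (extract n xs) as [phi [L [Hphi HL]]]. { intro k; apply Hxs. }
exists L. split.
- apply (UL_sequence (fun k => inner n (xs (phi k)) (xs (phi k)))).
  + apply cv_inner; auto.
  + replace (fun k => inner n (xs (phi k)) (xs (phi k))) with (fun _ : nat => 1).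
    apply cv_const. apply functional_extensionality; intro k. symmetry. apply Hxs.
- pose proof (cv_app n T (fun k => xs (phi k)) L HL) as Ha.
  pose proof (cv_inner n _ _ _ _ (fun i _ => Ha i) (fun i _ => Ha i)) as Hc. simpl in Hc.
  apply Rle_antisym.
  + eapply (cv_le _ _ _ _ Hc (cv_const _)). intro k. apply opnorm_ge2; auto. apply Hxs.
  + assert (HL2 : Un_cv (fun k => opnorm n T ^ 2 - / (INR (phi k) + 1)) (opnorm n T ^ 2)).
    { pose proof (CV_minus _ _ _ _ (cv_const (opnorm n T ^ 2)) (inv_cv0 phi Hphi)) as Hm.
      rewrite Rminus_0_r in Hm. exact Hm. }
    apply (cv_le _ _ _ _ HL2 Hc). intro k. left. apply Hxs. Qed.
Lemma rsum_zero n : rsum n (fun _ => 0) = 0.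
Proof. induction n; simpl; [auto|rewrite IHn; ring]. Qed.

Lemma psd n T x : (1 <= n)%nat -> inner n (app n T x) (app n T x) <= opnorm n T ^ 2 * inner n x x.
Proof. intros Hn. pose proof (inner_self_nonneg n x) as Hr.
destruct (Req_dec (inner n x x) 0) as [H0|H0].
- assert (Hz : forall i, app n T x i = 0).
  { intro i. unfold app. rewrite <- (rsum_zero n). apply rsum_ext. intros j Hj.
    rewrite (inner_zero_coord n x j H0 Hj). ring. }
  unfold inner at 1. rewrite (rsum_ext n _ (fun _ => 0)). rewrite rsum_zero, H0. lra.
  intros i _. rewrite Hz. ring.
- set (r := inner n x x) in *. assert (Hrp : 0 < r) by lra.
  set (s := / sqrt r). assert (Hsq : sqrt r * sqrt r = r) by (apply sqrt_sqrt; lra).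
  assert (Hsp : 0 < sqrt r) by (apply sqrt_lt_R0; lra).
  assert (Hs : s * sqrt r = 1) by (unfold s; field; lra).
  assert (Hs2 : s ^ 2 * r = 1) by (rewrite <- Hsq; replace (s^2 * (sqrt r * sqrt r)) with ((s * sqrt r)*(s*sqrt r)) by ring; rewrite Hs; ring).
  pose proof (opnorm_ge2 n T (vlc s x 0 x) Hn) as H.
  rewrite app_lc, !inner_lc2 in H. fold r in H.
  assert (Hw: s ^ 2 * inner n (app n T x) (app n T x) <= opnorm n T ^ 2).
  { replace (s ^ 2 * inner n (app n T x) (app n T x)) with
      (s ^ 2 * inner n (app n T x) (app n T x) + 2 * s * 0 * inner n (app n T x) (app n T x) +
       0 ^ 2 * inner n (app n T x) (app n T x)) by ring. apply H. rewrite <- Hs2. ring. }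
  apply (Rmult_le_compat_r r) in Hw; [|lra].
  replace (s ^ 2 * inner n (app n T x) (app n T x) * r) with (inner n (app n T x) (app n T x)) in Hw
    by (rewrite <- (Rmult_1_l (inner n (app n T x) (app n T x))) at 1; rewrite <- Hs2; ring).
  lra. Qed.

Lemma subspace n T x y a b : (1 <= n)%nat -> MT2 n T x -> MT2 n T y ->
  inner n (app n T (vlc a x b y)) (app n T (vlc a x b y)) = opnorm n T ^ 2 * inner n (vlc a x b y) (vlc a x b y).
Proof. intros Hn [Hx1 Hx2] [Hy1 Hy2].
set (mu := opnorm n T ^ 2) in *.
set (B := mu * inner n x y - inner n (app n T x) (app n T y)).
assert (HP : forall t, 0 <= 2 * t * B).
{ intro t. pose proof (psd n T (vlc 1 x t y) Hn) as H. rewrite app_lc, !inner_lc2 in H.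
  fold mu in H. unfold B. nra. }
assert (HB : B = 0) by (pose proof (HP 1); pose proof (HP (-1)); lra).
rewrite app_lc, !inner_lc2. unfold B in HB. fold mu. nra. Qed.

Definition qf n T A x := inner n (app n T x) (app n A x).

Lemma sign_core n T A x y : (1 <= n)%nat -> (forall w, MT2 n T w -> qf n T A w <> 0) ->
  MT2 n T x -> MT2 n T y -> 0 <= inner n x y -> qf n T A x > 0 -> qf n T A y < 0 -> False.
Proof. intros Hn H0 Hx Hy Hxy Hqx Hqy.
set (r := inner n (app n T x) (app n A y) + inner n (app n T y) (app n A x)).
set (qx := qf n T A x) in *. set (qy := qf n T A y) in *.
destruct (IVT (fun t => -((1-t)^2 * qx + t*(1-t)*r + t^2*qy)) 0 1) as [t0 [Ht0 Hf]].
{ apply derivable_continuous. reg. }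
{ lra. } { simpl. lra. } { simpl. lra. }
set (z := vlc (1 - t0) x t0 y).
assert (Hqz : qf n T A z = 0).
{ unfold qf, z. rewrite !app_lc, inner_lc_l, !inner_lc_r. unfold qx, qy, r, qf in Hf. rewrite <- Ropp_0, <- Hf. ring. }
destruct Hx as [Hx1 Hx2]. destruct Hy as [Hy1 Hy2].
set (rz := inner n z z).
assert (Hrz : 0 < rz). { unfold rz, z. rewrite inner_lc2, Hx1, Hy1.
  assert (0 <= (1-t0)*t0*inner n x y) by (apply Rmult_le_pos; [apply Rmult_le_pos|]; lra). nra. }
assert (HTz : inner n (app n T z) (app n T z) = opnorm n T ^ 2 * rz) by (apply subspace; [auto| split; auto | split; auto]).
set (s := / sqrt rz). assert (Hsq : sqrt rz * sqrt rz = rz) by (apply sqrt_sqrt; lra).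
assert (Hsp : 0 < sqrt rz) by (apply sqrt_lt_R0; lra).
assert (Hs : s * sqrt rz = 1) by (unfold s; field; lra).
assert (Hs2 : s ^ 2 * rz = 1) by (rewrite <- Hsq; replace (s^2 * (sqrt rz * sqrt rz)) with ((s * sqrt rz)*(s*sqrt rz)) by ring; rewrite Hs; ring).
apply (H0 (vlc s z 0 z)).
- split.
  + rewrite inner_lc2. fold rz. rewrite <- Hs2. ring.
  + rewrite app_lc, inner_lc2, HTz. transitivity (opnorm n T ^ 2 * (s^2 * rz)); [ring| rewrite Hs2; ring].
- unfold qf in *. rewrite !app_lc, inner_lc_l, !inner_lc_r, Hqz. ring. Qed.
Lemma sign_lem n T A x y : (1 <= n)%nat -> (forall w, MT2 n T w -> qf n T A w <> 0) ->
  MT2 n T x -> MT2 n T y -> qf n T A x > 0 -> qf n T A y < 0 -> False.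
Proof. intros Hn H0 Hx Hy Hqx Hqy.
destruct (Rle_lt_dec 0 (inner n x y)).
- apply (sign_core n T A x y); auto.
- apply (sign_core n T A x (vlc (-1) y 0 y)); auto.
  + destruct Hy as [Hy1 Hy2]. split.
    * rewrite inner_lc2, Hy1. ring.
    * rewrite app_lc, inner_lc2, Hy2. ring.
  + rewrite inner_lc_r. lra.
  + unfold qf in *. rewrite !app_lc, inner_lc_l, !inner_lc_r. lra. Qed.

Lemma bj_back n eps T A x : (1 <= n)%nat -> 0 <= eps -> MT2 n T x ->
  Rabs (qf n T A x) <= eps * opnorm n T * opnorm n A -> BJ_eps n eps T A.
Proof. intros Hn He [Hx1 Hx2] Hq l.
rewrite opnorm_scale by auto.
pose proof (opnorm_ge2 n (madd T (mscale l A)) x Hn Hx1) as H.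
rewrite app_madd, inner_lc2, Hx2 in H.
pose proof (inner_self_nonneg n (app n A x)).
set (o := opnorm n (madd T (mscale l A))) in *.
set (q := qf n T A x) in *. unfold qf in q. fold q in H.
assert (Hlq : - (Rabs l * (eps * opnorm n T * opnorm n A)) <= l * q).
{ assert (Rabs (l * q) <= Rabs l * (eps * opnorm n T * opnorm n A)).
  { rewrite Rabs_mult. apply Rmult_le_compat_l; auto. apply Rabs_pos. }
  pose proof (Rle_abs (-(l*q))). rewrite Rabs_Ropp in H2. lra. }
assert (0 <= l^2 * inner n (app n A x) (app n A x)) by (apply Rmult_le_pos; auto; apply pow2_ge_0).
apply Rle_ge. nra. Qed.
Lemma alg (s t a b q mu oA2 c o2 : R) : (s = 1 \/ s = -1) -> 0 < t <= 1 -> 0 <= a <= mu ->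
  0 <= b <= oA2 -> 2 * Rabs q <= a + b -> 0 <= c ->
  o2 >= mu - 2*c*t -> o2 - t^2 < 1^2*a + 2*1*(s*t)*q + (s*t)^2*b ->
  s*q >= -c - t*(1+oA2)/2 /\ a >= mu - t*(2*c+1+mu+2*oA2).
Proof. intros Hs Ht Ha Hb Hq Hc Ho Hx.
assert (Hsq : - Rabs q <= s * q <= Rabs q).
{ destruct Hs; subst; unfold Rabs; destruct Rcase_abs; lra. }
assert (Hs2 : (s*t)^2 = t^2) by (destruct Hs; subst; ring).
rewrite Hs2 in Hx.
assert (Htb : t^2 * b <= t^2 * oA2) by (apply Rmult_le_compat_l; [nra|lra]).
assert (Htt : t^2 <= t) by nra.
assert (Htb2 : t^2 * b <= t * oA2) by nra.
assert (Hx' : a + 2*t*(s*q) + t^2*b > mu - 2*c*t - t^2) by lra.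
split.
- assert (t * (2*(s*q) + 2*c + t*(1+oA2)) > 0) by nra.
  assert (2*(s*q) + 2*c + t*(1+oA2) > 0) by nra. lra.
- assert (t*(s*q) >= - t * Rabs q) by nra.
  assert (2 * t * Rabs q <= t * (mu + oA2)) by nra.
  nra. Qed.

Lemma slem n eps T A s : (1 <= n)%nat -> 0 <= eps -> (s = 1 \/ s = -1) ->
  (forall x, MT2 n T x -> s * qf n T A x < - (eps * opnorm n T * opnorm n A)) ->
  BJ_eps n eps T A -> False.
Proof. intros Hn He Hs HM HBJ.
pose proof (opnorm_nonneg n T Hn) as HoT. pose proof (opnorm_nonneg n A Hn) as HoA.
set (oT := opnorm n T) in *. set (oA := opnorm n A) in *.
set (mu := oT ^ 2). set (c := eps * oT * oA).
assert (Hc : 0 <= c) by (unfold c; repeat apply Rmult_le_pos; auto).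
set (K := 2*c+1+mu+2*oA^2).
destruct (my_choice (fun k x => inner n x x = 1 /\
   opnorm n (madd T (mscale (s * / (INR k + 1)) A)) ^ 2 - (/ (INR k + 1))^2 <
   inner n (app n (madd T (mscale (s * / (INR k + 1)) A)) x) (app n (madd T (mscale (s * / (INR k + 1)) A)) x)))
  as [xs Hxs].
{ intro k. apply opnorm_approx; auto. pose proof (pos_INR k).
  assert (0 < / (INR k + 1)) by (apply Rinv_0_lt_compat; lra). nra. }
assert (Hk : forall k, s * qf n T A (xs k) >= -c - / (INR k + 1) * (1 + oA^2) / 2 /\
   inner n (app n T (xs k)) (app n T (xs k)) >= mu - / (INR k + 1) * K).
{ intro k. set (t := / (INR k + 1)). pose proof (pos_INR k).
  assert (Ht0 : 0 < t) by (apply Rinv_0_lt_compat; lra).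
  assert (Ht1 : t <= 1) by (unfold t; rewrite <- Rinv_1; apply Rinv_le_contravar; lra).
  destruct (Hxs k) as [Hx1 Hx2]. fold t in Hx2.
  specialize (HBJ (s*t)). rewrite opnorm_scale in HBJ by auto.
  assert (Hst : Rabs (s*t) = t).
  { rewrite Rabs_mult, (Rabs_pos_eq t) by lra. destruct Hs; subst s.
    all: unfold Rabs; destruct Rcase_abs; lra. }
  rewrite Hst in HBJ. fold oT oA in HBJ.
  rewrite app_madd, inner_lc2 in Hx2.
  unfold K. unfold qf.
  apply (alg s t _ (inner n (app n A (xs k)) (app n A (xs k))) _ mu (oA^2) c (opnorm n (madd T (mscale (s * t) A)) ^ 2)); auto.
  - split. apply inner_self_nonneg. apply opnorm_ge2; auto.
  - split. apply inner_self_nonneg. apply opnorm_ge2; auto.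
  - apply inner_bound2.
  - unfold mu, c. lra. }
destruct (extract n xs) as [phi [L [Hphi HL]]]. { intro k; apply Hxs. }
pose proof (cv_app n T (fun k => xs (phi k)) L HL) as HaT.
pose proof (cv_app n A (fun k => xs (phi k)) L HL) as HaA.
pose proof (inv_cv0 phi Hphi) as Ht.
assert (HL1 : inner n L L = 1).
{ apply (UL_sequence (fun k => inner n (xs (phi k)) (xs (phi k)))).
  + apply cv_inner; auto.
  + replace (fun k => inner n (xs (phi k)) (xs (phi k))) with (fun _ : nat => 1).
    apply cv_const. apply functional_extensionality; intro k. symmetry. apply Hxs. }
assert (HL2 : inner n (app n T L) (app n T L) = mu).
{ pose proof (cv_inner n _ _ _ _ (fun i _ => HaT i) (fun i _ => HaT i)) as Hc1. simpl in Hc1.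
  apply Rle_antisym.
  + apply (cv_le _ _ _ _ Hc1 (cv_const _)). intro k. apply opnorm_ge2; auto. apply Hxs.
  + assert (Hl : Un_cv (fun k => mu - / (INR (phi k) + 1) * K) mu).
    { pose proof (CV_minus _ _ _ _ (cv_const mu) (CV_mult _ _ _ _ Ht (cv_const K))) as Hm.
      rewrite Rmult_0_l, Rminus_0_r in Hm. exact Hm. }
    apply (cv_le _ _ _ _ Hl Hc1). intro k. apply Rge_le, Hk. }
assert (HL3 : s * qf n T A L >= - c).
{ pose proof (cv_inner n _ _ _ _ (fun i _ => HaT i) (fun i _ => HaA i)) as Hc1. simpl in Hc1.
  pose proof (CV_mult _ _ _ _ (cv_const s) Hc1) as Hc2.
  assert (Hl : Un_cv (fun k => -c - / (INR (phi k) + 1) * (1 + oA^2) / 2) (-c)).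
  { pose proof (CV_minus _ _ _ _ (cv_const (-c)) (CV_mult _ _ _ _ (CV_mult _ _ _ _ Ht (cv_const (1 + oA^2))) (cv_const (/2)))) as Hm.
    rewrite !Rmult_0_l, Rminus_0_r in Hm. exact Hm. }
  apply Rle_ge. apply (cv_le _ _ _ _ Hl Hc2). intro k. apply Rge_le. apply Hk. }
specialize (HM L (conj HL1 HL2)). fold oT oA c in HM. lra. Qed.
Lemma part1 n eps T A : (1 <= n)%nat -> 0 <= eps < 1 ->
  BJ_eps n eps T A <->
  exists x : vec, MT n T x /\
    Rabs (inner n (app n T x) (app n A x)) <= eps * opnorm n T * opnorm n A.
Proof. intros Hn Heps. pose proof (opnorm_nonneg n T Hn). pose proof (opnorm_nonneg n A Hn).
assert (Hc : 0 <= eps * opnorm n T * opnorm n A) by (repeat apply Rmult_le_pos; lra).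
split.
- intro HBJ. apply NNPP; intro Hno.
  assert (Hall : forall x, MT2 n T x -> eps * opnorm n T * opnorm n A < Rabs (qf n T A x)).
  { intros x Hx. apply Rnot_le_lt. intro Hle. apply Hno. exists x. split; auto.
    apply MT_iff; auto. }
  assert (Hnz : forall w, MT2 n T w -> qf n T A w <> 0).
  { intros w Hw Hz. specialize (Hall w Hw). rewrite Hz, Rabs_R0 in Hall. lra. }
  destruct (MT_nonempty n T Hn) as [x0 Hx0].
  destruct (Rtotal_order (qf n T A x0) 0) as [Hneg|[Hz|Hpos]].
  + apply (slem n eps T A 1); auto; [lra|].
    intros y Hy. destruct (Rle_lt_dec 0 (qf n T A y)) as [Hge|Hlt].
    * destruct Hge as [Hgt|Heq]. exfalso. apply (sign_lem n T A y x0); auto.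
      exfalso. apply (Hnz y Hy). auto.
    * specialize (Hall y Hy). rewrite Rabs_left in Hall by lra. lra.
  + exfalso. apply (Hnz x0); auto.
  + apply (slem n eps T A (-1)); auto; [lra|].
    intros y Hy. destruct (Rle_lt_dec 0 (qf n T A y)) as [Hge|Hlt].
    * destruct Hge as [Hgt|Heq].
      -- specialize (Hall y Hy). rewrite Rabs_right in Hall by lra. lra.
      -- exfalso. apply (Hnz y Hy). auto.
    * exfalso. apply (sign_lem n T A x0 y); auto.
- intros [x [Hx Hq]]. apply (bj_back n eps T A x); auto; [lra| apply MT_iff; auto]. Qed.

Theorem mainTheorem4 (n : nat) (eps : R) (T : mat)
  (Hn : (1 <= n)%nat) (Heps : 0 <= eps < 1) :
  (forall A : mat,
     BJ_eps n eps T A <->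
     exists x : vec, MT n T x /\
       Rabs (inner n (app n T x) (app n A x)) <= eps * opnorm n T * opnorm n A)
  /\
  (forall A : mat,
     (forall x : vec, MT n T x -> MT n A x) ->
     (BJ_eps n eps T A <->
      exists x : vec, MT n T x /\ iperp_eps n eps (app n T x) (app n A x))).
Proof. split.
- intro A. apply part1; auto.
- intros A HMA. rewrite part1 by auto. split.
  + intros [x [Hx Hq]]. exists x. split; auto. unfold iperp_eps.
    destruct (HMA x Hx) as [_ HA]. destruct Hx as [_ HT]. rewrite HA, HT. exact Hq.
  + intros [x [Hx Hq]]. exists x. split; auto. unfold iperp_eps in Hq.
    destruct (HMA x Hx) as [_ HA]. destruct Hx as [_ HT]. rewrite HA, HT in Hq. exact Hq. Qed.
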